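(* Let $h\in\mathbb{F}[x]$ with $\deg h\ge1$. Then: (i) every $\omega\in\mathrm{Aut}_{\mathbb{F}}(A_h)$ can be written $\omega=\phi_f\circ\tau_{\alpha,\beta}$ for some $(\alpha,\beta)\in\mathbb{P}$ and $f\in\mathbb{F}[x]$; (ii) for $(\alpha,\beta)\in\mathbb{P}$ and $f\in\mathbb{F}[x]$, $\tau_{\alpha,\beta}=\phi_f$ if and only if $\alpha=1$, $\beta=0$ and $f=0$; (iii) if $(\alpha,\beta)\in\mathbb{P}$, $\alpha\ne1$ and $\alpha^\ell=1$ for some $\ell\ge2$, then $\tau_{\alpha,\beta}^\ell=\mathrm{id}_{A_h}$; (iv) the abelian group $\{\phi_f: f\in\mathbb{F}[x]\}$, isomorphic to $(\mathbb{F}[x],+)$ via $f\mapsto\phi_f$, is a normal subgroup of $\mathrm{Aut}_{\mathbb{F}}(A_h)$; (v) $\tau_{\mathbb{P}}=\{\tau_{\alpha,\beta}:(\alpha,\beta)\in\mathbb{P}\}$ is a subgroup of $\mathrm{Aut}_{\mathbb{F}}(A_h)$ and $\mathrm{Aut}_{\mathbb{F}}(A_h)=\{\phi_f:f\in\mathbb{F}[x]\}\rtimes\tau_{\mathbb{P}}$.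
   Context: $\mathbb{F}$ is an arbitrary field. For $h\in\mathbb{F}[x]$, $A_h$ is the unital associative $\mathbb{F}$-algebra generated by $x,\hat y$ with defining relation $\hat yx-x\hat y=h$. Let $\mathbb{P}=\{(\alpha,\beta)\in\mathbb{F}^*\times\mathbb{F}: h(\alpha x+\beta)=\alpha^{\deg h}h(x)\}$. For $(\alpha,\beta)\in\mathbb{P}$, $\tau_{\alpha,\beta}$ is the automorphism of $A_h$ with $\tau_{\alpha,\beta}(x)=\alpha x+\beta$, $\tau_{\alpha,\beta}(\hat y)=\alpha^{\deg h-1}\hat y$. For $f\in\mathbb{F}[x]$, $\phi_f$ is the automorphism with $\phi_f(x)=x$, $\phi_f(\hat y)=\hat y+f$. *)

(* Defs.v *)
From HB Require Import structures.
From mathcomp Require Import all_boot all_order all_algebra.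
From Stdlib Require Import ClassicalEpsilon.
Set Implicit Arguments. Unset Strict Implicit. Unset Printing Implicit Defensive.
Import GRing.Theory.
Local Open Scope ring_scope.

Section Ah.
Variable F : fieldType.

Definition polA (A : algType F) (p : {poly F}) (a : A) : A :=
  (map_poly (in_alg A) p).[a].

Definition alg_hom (A B : algType F) (g : A -> B) : Prop :=
  (forall (k : F) (u v : A), g (k *: u + v) = k *: g u + g v) /\
  g 1 = 1 /\ (forall u v : A, g (u * v) = g u * g v).

Definition alg_aut (A : algType F) (g : A -> A) : Prop :=
  alg_hom g /\ bijective g.

(* (A, X, Y) is a presentation of A_h: generated by X, Y subject only to
   Y X - X Y = h(X), expressed by the universal property. *)
Definition is_Ah (h : {poly F}) (A : algType F) (X Y : A) : Prop :=
  Y * X - X * Y = polA h X /\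
  forall (B : algType F) (a b : B), b * a - a * b = polA h a ->
    (exists g : A -> B, alg_hom g /\ g X = a /\ g Y = b) /\
    (forall g1 g2 : A -> B, alg_hom g1 -> alg_hom g2 ->
       g1 X = a -> g1 Y = b -> g2 X = a -> g2 Y = b -> g1 =1 g2).

Definition degp (h : {poly F}) : nat := (size h).-1.

Definition inP (h : {poly F}) (alpha beta : F) : Prop :=
  alpha != 0 /\ h \Po (alpha *: 'X + beta%:P) = alpha ^+ degp h *: h.

Definition phi (A : algType F) (X Y : A) (f : {poly F}) : A -> A :=
  epsilon (inhabits id)
    (fun g => alg_hom g /\ g X = X /\ g Y = Y + polA f X).

Definition tau (h : {poly F}) (A : algType F) (X Y : A) (alpha beta : F)
  : A -> A :=
  epsilon (inhabits id)
    (fun g => alg_hom g /\ g X = alpha *: X + beta%:A /\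
              g Y = alpha ^+ (degp h).-1 *: Y).

End Ah.

(* Main.v *)
Require Import Defs.
From HB Require Import structures.
From mathcomp Require Import all_boot all_order all_algebra.
From mathcomp Require Import boolp ring zify.
From Stdlib Require Import ClassicalEpsilon.
From Stdlib Require Import FunctionalExtensionality ProofIrrelevance.
Set Implicit Arguments. Unset Strict Implicit. Unset Printing Implicit Defensive.
Import GRing.Theory.
Local Open Scope ring_scope.

Section Endo.
Variable F : fieldType.
Variable W : lmodType F.

Definition islin (f : W -> W) := forall (k : F) (u v : W), f (k *: u + v) = k *: f u + f v.

Record endo_r := Endo { eapp :> W -> W; elin : islin eapp }.

Lemma endo_ext (f g : endo_r) : (forall w, f w = g w) -> f = g.
Proof.
case: f g => f hf [g hg] /= E.
have Efg : f = g by apply: functional_extensionality.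
subst g; by rewrite (proof_irrelevance _ hf hg).
Qed.

Lemma islin_add (f : endo_r) u v : f (u + v) = f u + f v.
Proof. by have := elin f 1 u v; rewrite !scale1r. Qed.
Lemma islin0 (f : endo_r) : f 0 = 0.
Proof.
have := islin_add f 0 0; rewrite addr0 => E.
by apply: (addrI (f 0)); rewrite addr0 -E.
Qed.
Lemma islin_scale (f : endo_r) k u : f (k *: u) = k *: f u.
Proof. by rewrite -[k *: u]addr0 elin islin0 addr0. Qed.
Lemma islinN (f : endo_r) u : f (- u) = - f u.
Proof. by rewrite -scaleN1r islin_scale scaleN1r. Qed.

End Endo.

Section EndoAlg.
Variable F : fieldType.
Variable W : lmodType F.
Variable w0 : W.
Hypothesis hw0 : w0 != 0.

Definition endo of w0 != 0 := endo_r W.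
Local Notation E := (endo hw0).

Definition e0 : E := @Endo F W (fun _ => 0) (fun k u v => ltac:(by rewrite /= ?elin;rewrite scaler0 addr0)).
Definition eadd (f g : E) : E := @Endo F W (fun w => f w + g w)
  (fun k u v => ltac:(by rewrite /= ?elin;rewrite scalerDr addrACA)).
Definition eopp (f : E) : E := @Endo F W (fun w => - f w)
  (fun k u v => ltac:(by rewrite /= ?elin;rewrite opprD scalerN)).
Definition emul (f g : E) : E := @Endo F W (fun w => f (g w))
  (fun k u v => ltac:(by rewrite /= ?elin)).
Definition e1 : E := @Endo F W (fun w => w) (fun k u v => erefl).
Definition escale (k : F) (f : E) : E := @Endo F W (fun w => k *: f w)
  (fun k' u v => ltac:(by rewrite /= ?elin;rewrite scalerDr !scalerA mulrC)).

HB.instance Definition _ := gen_eqMixin E.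
HB.instance Definition _ := gen_choiceMixin E.

Lemma eaddA : associative eadd.
Proof. by move=> f g h; apply: endo_ext => w /=; rewrite addrA. Qed.
Lemma eaddC : commutative eadd.
Proof. by move=> f g; apply: endo_ext => w /=; rewrite addrC. Qed.
Lemma eadd0 : left_id e0 eadd.
Proof. by move=> f; apply: endo_ext => w /=; rewrite add0r. Qed.
Lemma eaddN : left_inverse e0 eopp eadd.
Proof. by move=> f; apply: endo_ext => w /=; rewrite addNr. Qed.
HB.instance Definition _ := GRing.isZmodule.Build E eaddA eaddC eadd0 eaddN.

Lemma emulA : associative emul.
Proof. by move=> f g h; apply: endo_ext. Qed.
Lemma emul1 : left_id e1 emul.
Proof. by move=> f; apply: endo_ext. Qed.
Lemma emulr1 : right_id e1 emul.
Proof. by move=> f; apply: endo_ext. Qed.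
Lemma emulDl : left_distributive emul +%R.
Proof. by move=> f g h; apply: endo_ext. Qed.
Lemma emulDr : right_distributive emul +%R.
Proof. by move=> f g h; apply: endo_ext => w /=; rewrite islin_add. Qed.
Lemma e1_neq0 : e1 != 0.
Proof.
apply/eqP => H; have : e1 w0 = (0 : E) w0 by rewrite H.
by move=> /= H0; move: hw0; rewrite H0 eqxx.
Qed.
HB.instance Definition _ := GRing.Zmodule_isNzRing.Build E emulA emul1 emulr1 emulDl emulDr e1_neq0.

Lemma escaleA a b (f : E) : escale a (escale b f) = escale (a * b) f.
Proof. by apply: endo_ext => w /=; rewrite scalerA. Qed.
Lemma escale1 : left_id 1 escale.
Proof. by move=> f; apply: endo_ext => w /=; rewrite scale1r. Qed.
Lemma escaleDr : right_distributive escale +%R.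
Proof. by move=> a f g; apply: endo_ext => w /=; rewrite scalerDr. Qed.
Lemma escaleDl (f : E) : {morph escale^~ f : a b / a + b}.
Proof. by move=> a b; apply: endo_ext => w /=; rewrite scalerDl. Qed.
HB.instance Definition _ := GRing.Zmodule_isLmodule.Build F E escaleA escale1 escaleDr escaleDl.

Lemma escaleAl (a : F) (f g : E) : a *: (f * g) = (a *: f) * g.
Proof. by apply: endo_ext. Qed.
HB.instance Definition _ := GRing.Lmodule_isLalgebra.Build F E escaleAl.
Lemma escaleAr (a : F) (f g : E) : a *: (f * g) = f * (a *: g).
Proof. by apply: endo_ext => w /=; rewrite islin_scale. Qed.
HB.instance Definition _ := GRing.Lalgebra_isAlgebra.Build F E escaleAr.

Lemma endo_mulE (f g : E) w : (f * g) w = f (g w). Proof. by []. Qed.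
Lemma endo_addE (f g : E) w : (f + g) w = f w + g w. Proof. by []. Qed.
Lemma endo_oppE (f : E) w : (- f) w = - f w. Proof. by []. Qed.
Lemma endo_scaleE k (f : E) w : (k *: f) w = k *: f w. Proof. by []. Qed.
Lemma endo_oneE w : (1 : E) w = w. Proof. by []. Qed.
Lemma endo_zeroE w : (0 : E) w = 0. Proof. by []. Qed.

End EndoAlg.


Section Gen.
Variable F : fieldType.

Lemma polAE (B : algType F) p (a : B) : polA p a = horner_alg a p.
Proof. by []. Qed.

Lemma polAD (B : algType F) p q (a : B) : polA (p + q) a = polA p a + polA q a.
Proof. by rewrite !polAE rmorphD. Qed.
Lemma polAM (B : algType F) p q (a : B) : polA (p * q) a = polA p a * polA q a.
Proof. by rewrite !polAE rmorphM. Qed.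
Lemma polAZ (B : algType F) k p (a : B) : polA (k *: p) a = k *: polA p a.
Proof. by rewrite -mul_polyC polAM polAE horner_algC mulr_algl. Qed.
Lemma polAN (B : algType F) p (a : B) : polA (- p) a = - polA p a.
Proof. by rewrite !polAE rmorphN. Qed.
Lemma polAB (B : algType F) p q (a : B) : polA (p - q) a = polA p a - polA q a.
Proof. by rewrite !polAE rmorphB. Qed.
Lemma polAC (B : algType F) c (a : B) : polA c%:P a = c%:A.
Proof. by rewrite polAE horner_algC. Qed.
Lemma polAX (B : algType F) (a : B) : polA 'X a = a.
Proof. by rewrite polAE horner_algX. Qed.
Lemma polA0 (B : algType F) (a : B) : polA 0 a = 0.
Proof. by rewrite polAE rmorph0. Qed.
Lemma polA1 (B : algType F) (a : B) : polA 1 a = 1.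
Proof. by rewrite polAE rmorph1. Qed.
Lemma polA_sum (B : algType F) n (P : 'I_n -> {poly F}) (a : B) :
  polA (\sum_(i < n) P i) a = \sum_(i < n) polA (P i) a.
Proof. by rewrite polAE rmorph_sum. Qed.
Lemma polA_comm (B : algType F) p (a : B) : polA p a * a = a * polA p a.
Proof.
have E1 := polAM p 'X a; have E2 := polAM 'X p a.
by rewrite polAX in E1 E2; rewrite -E1 -E2 mulrC.
Qed.
Lemma polA_comm2 (B : algType F) p q (a : B) : polA p a * polA q a = polA q a * polA p a.
Proof. by rewrite -!polAM mulrC. Qed.
Lemma polA_comp (B : algType F) p q (a : B) : polA (p \Po q) a = polA p (polA q a).
Proof.
elim/poly_ind: p => [|p c IH]; first by rewrite comp_poly0 !polA0.
by rewrite comp_polyD comp_polyM comp_polyX comp_polyC !polAD !polAM polAX !polAC IH.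
Qed.
Lemma polA_coef (B : algType F) p (a : B) :
  polA p a = \sum_(i < size p) p`_i *: a ^+ i.
Proof.
rewrite /polA horner_coef size_map_poly; apply: eq_bigr => i _.
by rewrite coef_map /= mulr_algl.
Qed.

Section Hom.
Variables (B C : algType F) (g : B -> C) (hg : alg_hom g).

Lemma homD u v : g (u + v) = g u + g v.
Proof. by have := hg.1 1 u v; rewrite !scale1r. Qed.
Lemma hom0 : g 0 = 0.
Proof. by have := homD 0 0; rewrite addr0 => E; apply: (addrI (g 0)); rewrite addr0 -E. Qed.
Lemma homZ k u : g (k *: u) = k *: g u.
Proof. by rewrite -[k *: u]addr0 hg.1 hom0 addr0. Qed.
Lemma homN u : g (- u) = - g u.
Proof. by rewrite -scaleN1r homZ scaleN1r. Qed.
Lemma homB u v : g (u - v) = g u - g v.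
Proof. by rewrite homD homN. Qed.
Lemma homM u v : g (u * v) = g u * g v.
Proof. exact: hg.2.2. Qed.
Lemma hom1 : g 1 = 1.
Proof. exact: hg.2.1. Qed.
Lemma homA k : g k%:A = k%:A.
Proof. by rewrite homZ hom1. Qed.
Lemma homX u n : g (u ^+ n) = g u ^+ n.
Proof. by elim: n => [|n IH]; rewrite ?expr0 ?hom1 // !exprS homM IH. Qed.
Lemma hom_sum n (P : 'I_n -> B) : g (\sum_(i < n) P i) = \sum_(i < n) g (P i).
Proof.
elim: n P => [|n IH] P; first by rewrite !big_ord0 hom0.
by rewrite !big_ord_recr /= homD IH.
Qed.
Lemma hom_polA p a : g (polA p a) = polA p (g a).
Proof.
elim/poly_ind: p => [|p c IH]; first by rewrite !polA0 hom0.
by rewrite !polAD !polAM !polAX !polAC homD homM IH homA.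
Qed.
End Hom.

Lemma hom_comp (B C D : algType F) (g1 : C -> D) (g2 : B -> C) :
  alg_hom g1 -> alg_hom g2 -> alg_hom (g1 \o g2).
Proof.
move=> h1 h2; split; [|split] => /=.
- by move=> k u v; rewrite h2.1 h1.1.
- by rewrite !hom1.
- by move=> u v; rewrite !homM.
Qed.

Lemma hom_id (B : algType F) : alg_hom (@id B).
Proof. by []. Qed.

End Gen.

From Stdlib Require Import ClassicalEpsilon FunctionalExtensionality.

Section Main.
Variables (F : fieldType) (h : {poly F}) (hdeg : (1 <= degp h)%N)
  (A : algType F) (X Y : A) (hA : is_Ah h X Y).
Local Notation H := (polA h X).

Lemma relA : Y * X - X * Y = H.
Proof. exact: hA.1. Qed.

Lemma rel_hom (B : algType F) (g : A -> B) : alg_hom g ->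
  g Y * g X - g X * g Y = polA h (g X).
Proof. by move=> hg; rewrite -!homM // -homB // relA hom_polA. Qed.

Lemma uniqA (B : algType F) (g1 g2 : A -> B) : alg_hom g1 -> alg_hom g2 ->
  g1 X = g2 X -> g1 Y = g2 Y -> g1 = g2.
Proof.
move=> h1 h2 EX EY; apply: functional_extensionality => x.
have R := rel_hom h1.
have [_ U] := hA.2 B (g1 X) (g1 Y) R.
by apply: U.
Qed.

Lemma existsA (B : algType F) (a b : B) : b * a - a * b = polA h a ->
  exists g : A -> B, alg_hom g /\ g X = a /\ g Y = b.
Proof. by move=> r; exact: (hA.2 B a b r).1. Qed.

Lemma phi_spec f : alg_hom (phi X Y f) /\ phi X Y f X = X /\ phi X Y f Y = Y + polA f X.
Proof.
have : exists g : A -> A, alg_hom g /\ g X = X /\ g Y = Y + polA f X.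
  apply: existsA.
  by rewrite mulrDl mulrDr opprD addrACA relA polA_comm subrr addr0.
by move=> /(epsilon_spec (inhabits id)).
Qed.

Lemma scal_rel (c a b : F) :
  (c *: Y) * (a *: X + b%:A) - (a *: X + b%:A) * (c *: Y) = (c * a) *: (Y * X - X * Y).
Proof.
rewrite mulrDr mulrDl mulr_algr mulr_algl -!scalerAr -!scalerAl.
rewrite !scalerA scalerBr [a * c]mulrC [b * c]mulrC.
by rewrite opprD addrACA subrr addr0.
Qed.

Lemma tau_spec a b : inP h a b -> alg_hom (tau h X Y a b) /\
  tau h X Y a b X = a *: X + b%:A /\ tau h X Y a b Y = a ^+ (degp h).-1 *: Y.
Proof.
move=> [a0 hab].
have : exists g : A -> A, alg_hom g /\ g X = a *: X + b%:A /\ g Y = a ^+ (degp h).-1 *: Y.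
  apply: existsA.
  have -> : a *: X + b%:A = polA (a *: 'X + b%:P) X by rewrite polAD polAZ polAX polAC.
  by rewrite -polA_comp hab polAZ polAD polAZ polAX polAC scal_rel relA -exprSr prednK.
by move=> /(epsilon_spec (inhabits id)).
Qed.

End Main.

Section Model.
Variable F : fieldType.
Definition Vt := {poly {poly F}}.
HB.instance Definition _ := GRing.Zmodule.on Vt.
Definition vscale (k : F) (q : Vt) : Vt := ((k%:P)%:P * (q : {poly {poly F}})).
Lemma vscaleA a b (v : Vt) : vscale a (vscale b v) = vscale (a * b) v.
Proof. by rewrite /vscale mulrA -!polyCM. Qed.
Lemma vscale1 : left_id 1 vscale.
Proof. by move=> v; rewrite /vscale mul1r. Qed.
Lemma vscaleDr : right_distributive vscale +%R.
Proof. by move=> a u v; rewrite /vscale mulrDr. Qed.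
Lemma vscaleDl (v : Vt) : {morph vscale^~ v : a b / a + b}.
Proof. by move=> a b; rewrite /vscale !polyCD mulrDl. Qed.
HB.instance Definition _ := GRing.Zmodule_isLmodule.Build F Vt vscaleA vscale1 vscaleDr vscaleDl.
Lemma vscaleE k (v : Vt) : k *: v = ((k%:P)%:P * (v : {poly {poly F}})). Proof. by []. Qed.

Variable h : {poly F}.
Definition Dx (q : {poly {poly F}}) : {poly {poly F}} := map_poly deriv q.
Lemma coef_Dx q i : (Dx q)`_i = (q`_i)^`().
Proof. by rewrite /Dx coef_map. Qed.
Definition Dop (q : Vt) : Vt := ('X * (q : {poly {poly F}}) + h%:P * Dx q : {poly {poly F}}).
Definition Mop (q : Vt) : Vt := ('X%:P * (q : {poly {poly F}}) : {poly {poly F}}).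

Lemma DxD p q : Dx (p + q) = Dx p + Dx q.
Proof. by apply/polyP => i; rewrite coefD !coef_Dx coefD derivD. Qed.
Lemma DxC c q : Dx (c%:P%:P * q) = c%:P%:P * Dx q.
Proof. by apply/polyP => i; rewrite coefCM !coef_Dx coefCM deriv_mulC. Qed.
Lemma DxM q : Dx (Mop q) = q + Mop (Dx q).
Proof.
apply/polyP => i; rewrite /Mop coefD !coefCM !coef_Dx coefCM derivM derivX mul1r.
by rewrite mulrC.
Qed.

Lemma Dop_lin : @islin F Vt Dop.
Proof.
move=> k u v; rewrite /Dop !vscaleE DxD DxC; ring.
Qed.
Lemma Mop_lin : @islin F Vt Mop.
Proof. by move=> k u v; rewrite /Mop !vscaleE; ring. Qed.

Lemma one_neq0 : (1 : Vt) != 0.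
Proof. exact: oner_neq0. Qed.

Definition EV := endo one_neq0.
Definition MopE : EV := @Endo F Vt Mop Mop_lin.
Definition DopE : EV := @Endo F Vt Dop Dop_lin.

Lemma polA_MopE p (q : Vt) : (polA p MopE) q = (p%:P * (q : {poly {poly F}}) : Vt).
Proof.
elim/poly_ind: p q => [|p c IH] q; first by rewrite polA0 mul0r.
rewrite polAD polAM polAX polAC endo_addE endo_mulE IH endo_scaleE endo_oneE vscaleE.
by rewrite /= /Mop polyCD polyCM mulrDl mulrA.
Qed.

Lemma rel_model : DopE * MopE - MopE * DopE = polA h MopE.
Proof.
apply: endo_ext => q; rewrite polA_MopE endo_addE endo_oppE !endo_mulE /=.
rewrite /Dop DxM /Mop /=; ring.
Qed.
End Model.

Section Rep.
Variables (F : fieldType) (h : {poly F}) (hdeg : (1 <= degp h)%N)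
  (A : algType F) (X Y : A) (hA : is_Ah h X Y).
Local Notation H := (polA h X).
Local Notation EVh := (EV F).

Definition rho : A -> EVh := epsilon (inhabits (fun _ => 0))
  (fun g => alg_hom g /\ g X = MopE F /\ g Y = DopE h).
Lemma rho_spec : alg_hom rho /\ rho X = MopE F /\ rho Y = DopE h.
Proof.
have : exists g : A -> EVh, alg_hom g /\ g X = MopE F /\ g Y = DopE h.
  by apply: (existsA hA); exact: rel_model.
by move=> /(epsilon_spec (inhabits (fun _ => 0))).
Qed.

Lemma YX : Y * X = X * Y + H.
Proof. by rewrite -(relA hA) addrC subrK. Qed.

Lemma Y_polA f : Y * polA f X = polA f X * Y + polA (h * f^`()) X.
Proof.
elim/poly_ind: f => [|f c IH]; first by rewrite deriv0 mulr0 !polA0 mulr0 mul0r addr0.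
rewrite derivMXaddC mulrDr mulrA !polAD !polAM polAX polAC.
rewrite mulrDr mulrA IH mulrDl -mulrA YX mulrDr.
rewrite polAM mulr_algr mulrDl mulr_algl (polA_comm2 h f X) !mulrA.
by rewrite -!addrA; congr (_ + _); rewrite addrA addrC.
Qed.

Definition sig (p : Vt F) : A := \sum_(j < size p) polA p`_j X * Y ^+ j.

Lemma sig_wide n (p : Vt F) : (size p <= n)%N -> sig p = \sum_(j < n) polA p`_j X * Y ^+ j.
Proof.
move=> Hn; rewrite /sig (big_ord_widen n (fun j => polA p`_j X * Y ^+ j)) // big_mkcond.
apply: eq_bigr => i _; case: ltnP => // le; by rewrite nth_default // polA0 mul0r.
Qed.

Lemma size_vscale k (u : Vt F) : (size (k *: u) <= size u)%N.
Proof.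
rewrite vscaleE; apply/leq_sizeP => j Hj; rewrite coefCM.
by rewrite nth_default ?mulr0.
Qed.

Lemma sig_lin k u v : sig (k *: u + v) = k *: sig u + sig v.
Proof.
pose n := maxn (size u) (size v).
have Hu : (size u <= n)%N by rewrite leq_maxl.
have Hv : (size v <= n)%N by rewrite leq_maxr.
have Hs : (size (k *: u + v)%R <= n)%N.
  by rewrite (leq_trans (size_polyD _ _)) // geq_max (leq_trans (size_vscale _ _)).
rewrite !(sig_wide Hu, sig_wide Hv, sig_wide Hs) scaler_sumr -big_split.
apply: eq_bigr => j _; rewrite coefD vscaleE coefCM polAD polAM polAC mulr_algl.
by rewrite mulrDl scalerAl.
Qed.

Lemma sig0 : sig 0 = 0.
Proof. by rewrite /sig size_poly0 big_ord0. Qed.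

Lemma sig1 : sig 1 = 1.
Proof. by rewrite /sig size_poly1 big_ord1 expr0 mulr1 coefC /= polA1. Qed.

Lemma sig_M p : sig (Mop p) = X * sig p.
Proof.
have Hs : (size (Mop p) <= size p)%N.
  by apply/leq_sizeP => j Hj; rewrite /Mop coefCM nth_default ?mulr0.
rewrite (sig_wide Hs) /sig mulr_sumr; apply: eq_bigr => j _.
by rewrite /Mop coefCM polAM polAX mulrA.
Qed.

Lemma sig_D p : sig (Dop h p) = Y * sig p.
Proof.
have Hs : (size (Dop h p) <= (size p).+1)%N.
  apply/leq_sizeP => j Hj; rewrite /Dop coefD coefXM coefCM coef_Dx.
  case: j Hj => // j Hj; rewrite !nth_default ?deriv0 ?mulr0 ?addr0 //.
  exact: leqW.
rewrite (sig_wide Hs) /sig mulr_sumr.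
under eq_bigr => j _ do rewrite /Dop coefD coefXM coefCM coef_Dx polAD mulrDl.
rewrite big_split /= big_ord_recl /= polA0 mul0r add0r big_ord_recr /= nth_default //.
rewrite deriv0 mulr0 polA0 mul0r addr0 -big_split /=; apply: eq_bigr => j _.
by rewrite mulrA Y_polA mulrDl -mulrA -exprS addrC.
Qed.
End Rep.

Section Conj.
Variables (F : fieldType) (h : {poly F}) (hdeg : (1 <= degp h)%N)
  (A : algType F) (X Y : A) (hA : is_Ah h X Y).
Local Notation H := (polA h X).
Local Notation rho := (rho h X Y).
Local Notation sig := (sig X Y).

Lemma rho_hom : alg_hom rho. Proof. exact: (rho_spec hA).1. Qed.
Lemma rhoX : rho X = MopE F. Proof. exact: (rho_spec hA).2.1. Qed.
Lemma rhoY : rho Y = DopE h. Proof. exact: (rho_spec hA).2.2. Qed.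

Definition W2 := (A * Vt F)%type.
Lemma w2_neq0 : ((0, 1) : W2) != 0.
Proof. by rewrite xpair_eqE negb_and oner_neq0 orbT. Qed.
Definition E2 := endo w2_neq0.
Lemma pscaleE k (a : A) (b : Vt F) : k *: ((a, b) : W2) = (k *: a, k *: b). Proof. by []. Qed.
Lemma paddE (a a' : A) (b b' : Vt F) : ((a, b) : W2) + (a', b') = (a + a', b + b'). Proof. by []. Qed.
Lemma pscale1 k (w : W2) : (k *: w).1 = k *: w.1. Proof. by []. Qed.
Lemma pscale2 k (w : W2) : (k *: w).2 = k *: w.2. Proof. by []. Qed.
Lemma padd1 (w w' : W2) : (w + w').1 = w.1 + w'.1. Proof. by []. Qed.
Lemma padd2 (w w' : W2) : (w + w').2 = w.2 + w'.2. Proof. by []. Qed.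
Lemma psub1 (w w' : W2) : (w - w').1 = w.1 - w'.1. Proof. by []. Qed.
Lemma psub2 (w w' : W2) : (w - w').2 = w.2 - w'.2. Proof. by []. Qed.

Lemma G1_lin (a : A) : @islin F W2 (fun w => (a * w.1, rho a w.2)).
Proof.
move=> k [u1 u2] [v1 v2] /=; rewrite ?pscaleE ?paddE /=; congr (_, _); first by rewrite mulrDr -scalerAr.
exact: elin.
Qed.
Definition G1 (a : A) : E2 := @Endo F W2 _ (G1_lin a).

Lemma Psi_lin : @islin F W2 (fun w => (w.1 + sig w.2, w.2)).
Proof.
move=> k [u1 u2] [v1 v2] /=; rewrite ?pscaleE ?paddE /=; congr (_, _); rewrite sig_lin scalerDr.
by rewrite -!addrA; congr (_ + _); rewrite addrCA.
Qed.
Definition Psi : E2 := @Endo F W2 _ Psi_lin.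
Lemma PsiI_lin : @islin F W2 (fun w => (w.1 - sig w.2, w.2)).
Proof.
move=> k [u1 u2] [v1 v2] /=; rewrite ?pscaleE ?paddE /=; congr (_, _); rewrite sig_lin scalerBr opprD.
by rewrite -!addrA; congr (_ + _); rewrite addrCA.
Qed.
Definition PsiI : E2 := @Endo F W2 _ PsiI_lin.

Lemma PsiIK : PsiI * Psi = 1.
Proof. by apply: endo_ext => -[u v]; rewrite endo_mulE /= addrK. Qed.
Lemma PsiK : Psi * PsiI = 1.
Proof. by apply: endo_ext => -[u v]; rewrite endo_mulE /= subrK. Qed.

Definition G2 (a : A) : E2 := PsiI * G1 a * Psi.

Lemma G1_hom : alg_hom G1.
Proof.
split; [|split].
- move=> k u v; apply: endo_ext => -[w1 w2] /=; rewrite ?endo_addE ?endo_scaleE /= ?pscaleE ?paddE /=; congr (_, _).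
    by rewrite mulrDl scalerAl.
  by rewrite (rho_hom.1).
- apply: endo_ext => -[w1 w2] /=; rewrite ?endo_addE ?endo_scaleE /= ?pscaleE ?paddE /=; congr (_, _); first by rewrite mul1r.
  by rewrite (hom1 rho_hom).
- move=> u v; apply: endo_ext => -[w1 w2] /=; rewrite ?endo_addE ?endo_scaleE /= ?pscaleE ?paddE /=; congr (_, _); first by rewrite mulrA.
  by rewrite (homM rho_hom).
Qed.

Lemma G2_hom : alg_hom G2.
Proof.
split; [|split].
- move=> k u v; rewrite /G2 G1_hom.1 mulrDr mulrDl; congr (_ + _).
  by rewrite -scalerAr -scalerAl.
- by rewrite /G2 (hom1 G1_hom) mulr1 PsiIK.
- move=> u v; rewrite /G2 (homM G1_hom) -!mulrA; congr (_ * _); congr (_ * _).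
  by rewrite !mulrA PsiK mul1r.
Qed.

Lemma G2X : G2 X = G1 X.
Proof.
apply: endo_ext => -[w1 w2]; rewrite /G2 !endo_mulE /= rhoX /= sig_M.
by congr (_, _); rewrite mulrDr addrK.
Qed.
Lemma G2Y : G2 Y = G1 Y.
Proof.
apply: endo_ext => -[w1 w2]; rewrite /G2 !endo_mulE /= rhoY /= (sig_D hA).
by congr (_, _); rewrite mulrDr addrK.
Qed.

Definition Phi (a : A) : Vt F := rho a 1.

Lemma sigPhi a : sig (Phi a) = a.
Proof.
have E := uniqA hA G1_hom G2_hom (esym G2X) (esym G2Y).
have := congr1 (fun g => (g a : E2) (0, 1)) E.
rewrite /G2 !endo_mulE /= mulr0 add0r sig1 mulr1 => -[] /eqP.
by rewrite eq_sym subr_eq0 => /eqP <-.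
Qed.
End Conj.

Section SumLem.
Variable R : idomainType.
Lemma size_sum_top (r : nat -> {poly R}) n s k : (0 < s)%N -> (0 < k)%N ->
  (forall j, (j < n)%N -> (size (r j) <= s + j * k)%N) -> size (r n) = (s + n * k)%N ->
  size (\sum_(j < n.+1) r j)%R = (s + n * k)%N /\
  lead_coef (\sum_(j < n.+1) r j)%R = lead_coef (r n).
Proof.
move=> s0 k0 Hle Hn; rewrite big_ord_recr /=.
have Hlt : (size (\sum_(j < n) r j)%R < size (r n))%N.
  rewrite Hn; case: n Hle Hn => [|n] Hle Hn.
    by rewrite big_ord0 size_poly0 addn0.
  apply: (leq_ltn_trans (size_sum _ _ _)).
  have : (\max_(j < n.+1) size (r j) <= s + n * k)%N.
    apply/bigmax_leqP => /= j _ /=.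
    by rewrite (leq_trans (Hle _ (ltn_ord j))) // leq_add2l leq_mul2r -ltnS ltn_ord orbT.
  move/leq_ltn_trans; apply.
  by rewrite ltn_add2l ltn_pmul2r.
by rewrite addrC size_polyDl // lead_coefDl // Hn.
Qed.
End SumLem.

Section PhiSec.
Variables (F : fieldType) (h : {poly F}) (hdeg : (1 <= degp h)%N)
  (A : algType F) (X Y : A) (hA : is_Ah h X Y).
Local Notation H := (polA h X).
Local Notation rho := (rho h X Y).
Local Notation sig := (sig X Y).
Local Notation Phi := (Phi h X Y).

Lemma Phi_lin k u v : Phi (k *: u + v) = k *: Phi u + Phi v.
Proof. by rewrite /Phi (rho_hom hA).1. Qed.
Lemma PhiD u v : Phi (u + v) = Phi u + Phi v.
Proof. by have := Phi_lin 1 u v; rewrite !scale1r. Qed.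
Lemma Phi0 : Phi 0 = 0.
Proof. by rewrite /Phi (hom0 (rho_hom hA)). Qed.
Lemma PhiZ k u : Phi (k *: u) = k *: Phi u.
Proof. by have := Phi_lin k u 0; rewrite !addr0 Phi0 addr0. Qed.
Lemma PhiN u : Phi (- u) = - Phi u.
Proof. by rewrite -scaleN1r PhiZ scaleN1r. Qed.
Lemma PhiB u v : Phi (u - v) = Phi u - Phi v.
Proof. by rewrite PhiD PhiN. Qed.
Lemma PhiM u v : Phi (u * v) = rho u (Phi v).
Proof. by rewrite /Phi (homM (rho_hom hA)). Qed.
Lemma Phi_inj u v : Phi u = Phi v -> u = v.
Proof. by move=> E; rewrite -(sigPhi hA u) -(sigPhi hA v) E. Qed.
Lemma Phi_eq0 u : (Phi u == 0) = (u == 0).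
Proof.
apply/eqP/eqP => [E|->]; last exact: Phi0.
by apply: Phi_inj; rewrite E Phi0.
Qed.

Lemma Dpow1 j : ((DopE h) ^+ j : EV F) 1 = ('X^j : {poly {poly F}}).
Proof.
elim: j => [|j IH]; first by rewrite expr0 endo_oneE expr0.
rewrite exprS endo_mulE IH /= /Dop.
have -> : Dx ('X^j : {poly {poly F}}) = 0 :> {poly {poly F}}.
  apply/polyP => i; rewrite coef_Dx coefXn coef0.
  by case: eqP => _; rewrite /= ?deriv0 // -polyC1 derivC.
by rewrite mulr0 addr0 exprS.
Qed.

Lemma rho_polA f q : rho (polA f X) q = (f%:P * (q : {poly {poly F}}) : Vt F).
Proof. by rewrite (hom_polA (rho_hom hA)) rhoX // polA_MopE. Qed.

Lemma rho_sig p q : rho (sig p) q =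
  (\sum_(j < size p) (p`_j)%:P * ((DopE h ^+ j : EV F) q : {poly {poly F}}))%R.
Proof.
rewrite /sig (hom_sum (rho_hom hA)).
have -> : forall n (G : 'I_n -> EV F), (\sum_(j < n) G j) q = \sum_(j < n) G j q.
  move=> n G; elim: n G => [|n IH] G; first by rewrite !big_ord0.
  by rewrite !big_ord_recr /= IH.
apply: eq_bigr => j _; rewrite (homM (rho_hom hA)) endo_mulE rho_polA.
by rewrite (homX (rho_hom hA)) rhoY.
Qed.

Lemma Phi_sig p : Phi (sig p) = p.
Proof.
rewrite /Phi rho_sig.
under eq_bigr => j _ do rewrite Dpow1 mul_polyC.
by rewrite -poly_def coefK.
Qed.

Lemma Phi_polA f : Phi (polA f X) = (f%:P : {poly {poly F}}).
Proof. by rewrite /Phi rho_polA mulr1. Qed.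
Lemma PhiY : Phi Y = ('X : {poly {poly F}}).
Proof. by rewrite /Phi rhoY // -[DopE h]expr1 Dpow1 expr1. Qed.
Lemma Phi1 : Phi 1 = 1.
Proof. by rewrite -(polA1 X) Phi_polA. Qed.

Lemma polA_inj f g : polA f X = polA g X -> f = g.
Proof. by move=> E; have := Phi_polA f; rewrite E Phi_polA => /polyC_inj. Qed.

Lemma Phi_small u : (size (Phi u) <= 1)%N -> u = polA (Phi u)`_0 X.
Proof. by move=> /size1_polyC E; apply: Phi_inj; rewrite Phi_polA -E. Qed.

Lemma size_Dx (q : {poly {poly F}}) : (size (Dx q) <= size q)%N.
Proof. by apply/leq_sizeP => j Hj; rewrite coef_Dx nth_default ?deriv0. Qed.

Lemma size_Dop (q : Vt F) : q != 0 ->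
  size (Dop h q) = (size q).+1 /\ lead_coef (Dop h q) = lead_coef q.
Proof.
move=> q0; rewrite /Dop.
have E1 : size ('X * (q : {poly {poly F}})) = (size q).+1 by rewrite mulrC size_mulX.
have E2 : (size (h%:P * Dx q)%R < size ('X * (q : {poly {poly F}}))%R)%N.
  by rewrite E1 ltnS (leq_trans (size_mul_leq _ _)) // size_polyC; case: (h != 0) => /=;
  rewrite ?add0n ?add1n ?size_Dx // (leq_trans (leq_pred _) (size_Dx _)).
by rewrite size_polyDl // lead_coefDl // E1 mulrC lead_coefMX.
Qed.

Lemma size_Dpow (q : Vt F) j : q != 0 ->
  size ((DopE h ^+ j : EV F) q) = (size q + j)%N /\
  lead_coef ((DopE h ^+ j : EV F) q) = lead_coef q.
Proof.
move=> q0; elim: j => [|j [IH1 IH2]]; first by rewrite expr0 endo_oneE addn0.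
have n0 : (DopE h ^+ j : EV F) q != 0 by rewrite -size_poly_eq0 IH1 addn_eq0 size_poly_eq0 (negbTE q0).
rewrite exprS endo_mulE /=; have [S L] := size_Dop n0.
by rewrite S L IH1 IH2 addnS.
Qed.
End PhiSec.

Section Deg.
Variables (F : fieldType) (h : {poly F}) (hdeg : (1 <= degp h)%N)
  (A : algType F) (X Y : A) (hA : is_Ah h X Y).
Local Notation H := (polA h X).
Local Notation rho := (rho h X Y).
Local Notation sig := (sig X Y).
Local Notation Phi := (Phi h X Y).

Lemma size_rho_sig (p q : Vt F) : p != 0 -> q != 0 ->
  size (rho (sig p) q) = (size p + size q).-1 /\
  lead_coef (rho (sig p) q) = lead_coef p * lead_coef q.
Proof.
move=> p0 q0; rewrite (rho_sig hA).
have [n Hn] : exists n, size p = n.+1.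
  by exists (size p).-1; rewrite prednK // lt0n size_poly_eq0.
have s0 : (0 < size q)%N by rewrite lt0n size_poly_eq0.
have lp : p`_n != 0.
  by rewrite -[n]/(n.+1.-1) -Hn -lead_coefE lead_coef_eq0.
rewrite Hn.
pose r := fun j : nat => ((p`_j)%:P * ((DopE h ^+ j : EV F) q : {poly {poly F}}))%R.
have Hle : forall j, (j < n)%N -> (size (r j) <= size q + j * 1)%N.
  move=> j _; rewrite /r muln1 -(size_Dpow h j q0).1.
  rewrite (leq_trans (size_mul_leq _ _)) // size_polyC.
  by case: (_ != 0); rewrite ?add0n ?add1n // leq_pred.
have Hn' : size (r n) = (size q + n * 1)%N.
  by rewrite /r size_Cmul // (size_Dpow h n q0).1 muln1.
have [S L] := size_sum_top s0 (ltn0Sn 0) Hle Hn'.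
rewrite S L /r lead_coefM lead_coefC (size_Dpow h n q0).2 muln1.
by split; [rewrite addSn /= addnC | rewrite [lead_coef p]lead_coefE Hn].
Qed.

Lemma size_PhiM u v : u != 0 -> v != 0 ->
  size (Phi (u * v)) = (size (Phi u) + size (Phi v)).-1 /\
  lead_coef (Phi (u * v)) = lead_coef (Phi u) * lead_coef (Phi v).
Proof.
move=> u0 v0; rewrite (PhiM hA).
have := @size_rho_sig (Phi u) (Phi v); rewrite (sigPhi hA); apply; by rewrite (Phi_eq0 hA).
Qed.

Lemma mulA_eq0 (u v : A) : u * v = 0 -> u = 0 \/ v = 0.
Proof.
move=> E; case: (eqVneq u 0) => [|u0]; first by left.
case: (eqVneq v 0) => [|v0]; first by right.
have [S _] := size_PhiM u0 v0.
have Z : size (0 : Vt F) = 0%N by exact: size_poly0.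
move: S; rewrite E (Phi0 hA) Z.
have : (0 < size (Phi u))%N by rewrite lt0n size_poly_eq0 (Phi_eq0 hA).
have : (0 < size (Phi v))%N by rewrite lt0n size_poly_eq0 (Phi_eq0 hA).
by case: (size (Phi u)) => // a; case: (size (Phi v)) => // b _ _; rewrite addSn addnS.
Qed.

Lemma mulAI (u v w : A) : u != 0 -> u * v = u * w -> v = w.
Proof.
move=> u0 E; have : u * (v - w) = 0 by rewrite mulrBr E subrr.
by case/mulA_eq0 => [/eqP|/eqP]; rewrite ?(negbTE u0) // subr_eq0 => /eqP.
Qed.

Lemma gen_ind (P : A -> Prop) :
  (forall f, P (polA f X)) -> P Y -> (forall u v, P u -> P v -> P (u + v)) ->
  (forall u v, P u -> P v -> P (u * v)) -> forall u, P u.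
Proof.
move=> Pp PY PD PM u; rewrite -(sigPhi hA u) /sig.
apply: (big_ind P); [by rewrite -(polA0 X) | exact: PD |] => j _.
apply: (PM) => //; elim: (nat_of_ord j) => [|k IH]; first by rewrite expr0 -(polA1 X).
by rewrite exprS; apply: (PM).
Qed.

Lemma H_neq0 : H != 0.
Proof.
rewrite -(Phi_eq0 hA) (Phi_polA hA) polyC_eq0 -size_poly_eq0.
by move: hdeg; rewrite /degp; case: (size h).
Qed.

Lemma H_norm (u : A) : exists u', u * H = H * u'.
Proof.
elim/gen_ind: u.
- by move=> f; exists (polA f X); rewrite polA_comm2.
- exists (Y + polA h^`() X); rewrite (Y_polA hA) mulrDr -polAM.
  by congr (_ + _); rewrite polA_comm2.
- by move=> u v [u' Eu] [v' Ev]; exists (u' + v'); rewrite mulrDl mulrDr Eu Ev.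
- by move=> u v [u' Eu] [v' Ev]; exists (u' * v'); rewrite -mulrA Ev mulrA Eu mulrA.
Qed.

Lemma comm_gen (u : A) : (forall f, exists r, u * polA f X - polA f X * u = H * r) ->
  (exists r, u * Y - Y * u = H * r) -> forall v, exists r, u * v - v * u = H * r.
Proof.
move=> Hf HY; elim/gen_ind => //.
- by move=> v w [r1 E1] [r2 E2]; exists (r1 + r2);
  rewrite mulrDr mulrDl mulrDr opprD addrACA E1 E2.
- move=> v w [r1 E1] [r2 E2].
  have [v' Ev] := H_norm v.
  exists (r1 * w + v' * r2).
  have -> : u * (v * w) - v * w * u = (u * v - v * u) * w + v * (u * w - w * u).
    by rewrite mulrBl mulrBr !mulrA addrA subrK.
  by rewrite E1 E2 mulrA Ev mulrDr !mulrA.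
Qed.

Lemma comm_ideal (u v : A) : exists r, u * v - v * u = H * r.
Proof.
move: u v; elim/gen_ind.
- move=> f; apply: comm_gen.
    by move=> g; exists 0; rewrite polA_comm2 subrr mulr0.
  exists (- polA f^`() X); rewrite (Y_polA hA) opprD addrA subrr add0r polAM mulrN.
  by [].
- apply: comm_gen; last by exists 0; rewrite subrr mulr0.
  by move=> f; exists (polA f^`() X); rewrite (Y_polA hA) addrAC subrr add0r polAM.
- move=> u1 u2 I1 I2 v; have [r1 E1] := I1 v; have [r2 E2] := I2 v.
  by exists (r1 + r2); rewrite mulrDl mulrDr opprD addrACA E1 E2 mulrDr.
- move=> u1 u2 I1 I2 v; have [r1 E1] := I1 v; have [r2 E2] := I2 v.
  have [u1' Eu] := H_norm u1.
  exists (u1' * r2 + r1 * u2).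
  have -> : u1 * u2 * v - v * (u1 * u2) = u1 * (u2 * v - v * u2) + (u1 * v - v * u1) * u2.
    by rewrite mulrBl mulrBr !mulrA addrA subrK.
  by rewrite E1 E2 !mulrA Eu mulrDr !mulrA.
Qed.
End Deg.

Section Final.
Variables (F : fieldType) (h : {poly F}) (hdeg : (1 <= degp h)%N)
  (A : algType F) (X Y : A) (hA : is_Ah h X Y).
Local Notation H := (polA h X).
Local Notation rho := (rho h X Y).
Local Notation sig := (sig X Y).
Local Notation Phi := (Phi h X Y).
Local Notation d := (degp h).

Lemma h_neq0 : h != 0.
Proof. by rewrite -size_poly_eq0; move: hdeg; rewrite /degp; case: (size h). Qed.
Lemma size_h : size h = d.+1.
Proof. by rewrite /degp prednK // lt0n size_poly_eq0 h_neq0. Qed.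

Lemma Phi_sum n (G : 'I_n -> A) : Phi (\sum_(i < n) G i) = \sum_(i < n) Phi (G i).
Proof.
elim: n G => [|n IH] G; first by rewrite !big_ord0 (Phi0 hA).
by rewrite !big_ord_recr /= (PhiD hA) IH.
Qed.

Lemma size_Phi_pow (u : A) k i : size (Phi u) = k.+1 ->
  size (Phi (u ^+ i)) = (1 + i * k)%N.
Proof.
move=> Su; have u0 : u != 0 by rewrite -(Phi_eq0 hA) -size_poly_eq0 Su.
elim: i => [|i IH]; first by rewrite expr0 (Phi1 hA) size_poly1.
have ui0 : u ^+ i != 0.
  by rewrite -(Phi_eq0 hA) -size_poly_eq0 IH.
by rewrite exprS (size_PhiM hA u0 ui0).1 Su IH; lia.
Qed.

Lemma Phi_polAM q (u : A) : Phi (polA q X * u) = (q%:P * (Phi u : {poly {poly F}}) : Vt F).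
Proof. by rewrite (PhiM hA) (rho_polA hA). Qed.

Lemma size_Phi_polAM q (u : A) : (size (Phi (polA q X * u)) <= size (Phi u))%N.
Proof.
rewrite Phi_polAM (leq_trans (size_mul_leq _ _)) // size_polyC.
by case: (_ != 0); rewrite ?add0n ?add1n // leq_pred.
Qed.

Lemma size_Phi_polAM_eq q (u : A) : q != 0 -> size (Phi (polA q X * u)) = size (Phi u).
Proof. by move=> q0; rewrite Phi_polAM size_Cmul ?polyC_eq0. Qed.

Lemma size_Phi_polA p (u : A) k : p != 0 -> (0 < k)%N -> size (Phi u) = k.+1 ->
  size (Phi (polA p u)) = (1 + (size p).-1 * k)%N.
Proof.
move=> p0 k0 Su; rewrite polA_coef Phi_sum.
have [n Hn] : exists n, size p = n.+1.
  by exists (size p).-1; rewrite prednK // lt0n size_poly_eq0.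
rewrite Hn /=.
have lp : p`_n != 0.
  by rewrite -[n]/(n.+1.-1) -Hn -lead_coefE lead_coef_eq0.
pose r := fun j : nat => (Phi (p`_j *: u ^+ j) : {poly {poly F}}).
have Hle : forall j, (j < n)%N -> (size (r j) <= 1 + j * k)%N.
  move=> j _; rewrite /r (PhiZ hA) -(size_Phi_pow j Su).
  exact: size_vscale.
have Hn' : size (r n) = (1 + n * k)%N.
  by rewrite /r (PhiZ hA) vscaleE size_Cmul ?polyC_eq0 // (size_Phi_pow n Su).
exact: (size_sum_top (ltn0Sn 0) k0 Hle Hn').1.
Qed.


Lemma aut_inv (w : A -> A) : alg_aut w ->
  exists w', alg_hom w' /\ cancel w w' /\ cancel w' w.
Proof.
move=> [hw [w' K1 K2]]; exists w'; split => //; split; [|split].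
- by move=> k u v; apply: (can_inj K1); rewrite K2 hw.1 !K2.
- by apply: (can_inj K1); rewrite K2 (hom1 hw).
- by move=> u v; apply: (can_inj K1); rewrite K2 (homM hw) !K2.
Qed.

Lemma unitA (r s : A) : r * s = 1 -> exists l : F, l != 0 /\ r = l%:A.
Proof.
move=> E.
have r0 : r != 0 by apply/eqP => r0; move: E; rewrite r0 mul0r => /eqP; rewrite eq_sym oner_eq0.
have s0 : s != 0 by apply/eqP => s0; move: E; rewrite s0 mulr0 => /eqP; rewrite eq_sym oner_eq0.
have [S _] := size_PhiM hA r0 s0.
rewrite E (Phi1 hA) size_poly1 in S.
have Pr : (0 < size (Phi r))%N by rewrite lt0n size_poly_eq0 (Phi_eq0 hA).
have Ps : (0 < size (Phi s))%N by rewrite lt0n size_poly_eq0 (Phi_eq0 hA).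
have Sr : (size (Phi r) <= 1)%N by lia.
have Ss : (size (Phi s) <= 1)%N by lia.
have Er := Phi_small hA Sr; have Es := Phi_small hA Ss.
set c := (Phi r)`_0 in Er; set c' := (Phi s)`_0 in Es.
have cc : c * c' = 1 by apply: (polA_inj hA); rewrite polAM -Er -Es E polA1.
have c0 : c != 0 by apply/eqP => c0; move: cc; rewrite c0 mul0r => /eqP; rewrite eq_sym oner_eq0.
have c'0 : c' != 0 by apply/eqP => c1; move: cc; rewrite c1 mulr0 => /eqP; rewrite eq_sym oner_eq0.
have Sc : ((size c + size c').-1 = 1)%N by rewrite -size_mul // cc size_poly1.
have Pc : (0 < size c)%N by rewrite lt0n size_poly_eq0.
have Pc' : (0 < size c')%N by rewrite lt0n size_poly_eq0.
have Sc1 : (size c <= 1)%N by lia.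
exists c`_0; split.
  by move: c0; rewrite {1}(size1_polyC Sc1) polyC_eq0.
by rewrite Er {1}(size1_polyC Sc1) polAC.
Qed.


Lemma polAXn (p : {poly F}) (u : A) n : polA (p ^+ n) u = polA p u ^+ n.
Proof. by rewrite !polAE rmorphXn. Qed.

Lemma PhiY_neq0 : Y != 0.
Proof. by rewrite -(Phi_eq0 hA) (PhiY hA) polyX_eq0. Qed.

Lemma aut_form (w : A -> A) : alg_aut w -> exists (al be : F) (c : {poly F}),
  inP h al be /\ w X = al *: X + be%:A /\ w Y = al ^+ d.-1 *: Y + polA c X.
Proof.
move=> aw; have hw := aw.1.
have [w' [hw' [K1 K2]]] := aut_inv aw.
set a := w X; set b := w Y.
have Rab : b * a - a * b = polA h a := rel_hom hA hw.
have [r Er] := comm_ideal hA b a.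
have [r' Er'] := comm_ideal hA (w' Y) (w' X).
have E1 : H = polA h a * w r'.
  have := congr1 w Er'; rewrite (homB hw) !(homM hw) !K2 (relA hA) (hom_polA hw).
  done.
have Hr : H * (r * w r') = H * 1.
  by rewrite mulr1 mulrA -Er Rab -E1.
have rw1 : r * w r' = 1 := mulAI hA (H_neq0 hdeg hA) Hr.
have [l [l0 El]] := unitA rw1.
have Eha : polA h a = l *: H by rewrite -Rab Er El mulr_algr.
have Sa : (size (Phi a) <= 1)%N.
  rewrite leqNgt; apply/negP => Sa.
  have [k Ek] : exists k, size (Phi a) = k.+1.
    by exists (size (Phi a)).-1; rewrite prednK // (ltn_trans _ Sa).
  have k0 : (0 < k)%N by move: Sa; rewrite Ek.
  have := size_Phi_polA h_neq0 k0 Ek.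
  rewrite Eha (PhiZ hA) (Phi_polA hA) vscaleE size_Cmul ?polyC_eq0 // size_polyC h_neq0.
  rewrite size_h /=; lia.
set g := (Phi a)`_0.
have Ea : a = polA g X := Phi_small hA Sa.
have Ehg : h \Po g = l *: h.
  by apply: (polA_inj hA); rewrite polA_comp -Ea Eha polAZ.
have Sg : size g = 2.
  have := size_comp_poly h g; rewrite Ehg size_scale // size_h /= => E.
  move: E; case: (size g) => [|[|[|n]]] //= E; nia.
have al0 : g`_1 != 0.
  have : lead_coef g != 0 by rewrite lead_coef_eq0 -size_poly_eq0 Sg.
  by rewrite lead_coefE Sg.
have Eg : g = g`_1 *: 'X + (g`_0)%:P.
  apply/polyP => i; rewrite coefD coefZ coefX coefC.
  case: i => [|[|i]] /=; rewrite ?mulr0 ?mulr1 ?add0r ?addr0 //.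
  by rewrite nth_default // Sg.
have Ll : l = g`_1 ^+ d.
  have g1 : (1 < size g)%N by rewrite Sg.
  have := lead_coef_comp h g1; rewrite Ehg lead_coefZ size_h /= [lead_coef g]lead_coefE Sg /=.
  have lh : lead_coef h != 0 by rewrite lead_coef_eq0 h_neq0.
  by move=> E; apply: (mulIf lh); rewrite E mulrC.
set al := g`_1; set be := g`_0.
have inPab : inP h al be by split => //; rewrite -Eg Ehg Ll.
have EaX : a = al *: X + be%:A by rewrite Ea Eg polAD polAZ polAX polAC.
set p := Phi (w' Y).
have p0 : p != 0.
  rewrite (Phi_eq0 hA); apply/eqP => E0; have := PhiY_neq0.
  by rewrite -(K2 Y) E0 (hom0 hw) eqxx.
have EwY : Y = \sum_(j < size p) polA (p`_j \Po g) X * b ^+ j.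
  rewrite -{1}(K2 Y) -(sigPhi hA (w' Y)) -/p /sig (hom_sum hw); apply: eq_bigr => j _.
  by rewrite (homM hw) (homX hw) (hom_polA hw) -/a Ea -polA_comp.
have Sb : size (Phi b) = 2.
  have [Sb|Sb] := leqP (size (Phi b)) 1.
    have Eb := Phi_small hA Sb; set cb := (Phi b)`_0 in Eb.
    have : Y = polA (\sum_(j < size p) (p`_j \Po g) * cb ^+ j) X.
      rewrite polA_sum {1}EwY; apply: eq_bigr => j _.
      by rewrite Eb polAM polAXn.
    move/(congr1 Phi); rewrite (PhiY hA) (Phi_polA hA) => E.
    by have := size_polyX {poly F}; rewrite E size_polyC; case: (_ != 0).
  have [k Ek] : exists k, size (Phi b) = k.+1.
    by exists (size (Phi b)).-1; rewrite prednK // (ltn_trans _ Sb).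
  have k0 : (0 < k)%N by move: Sb; rewrite Ek.
  have [n Hn] : exists n, size p = n.+1.
    by exists (size p).-1; rewrite prednK // lt0n size_poly_eq0.
  have lp : p`_n != 0.
    by rewrite -[n]/(n.+1.-1) -Hn -lead_coefE lead_coef_eq0.
  pose rr := fun j : nat => (Phi (polA (p`_j \Po g) X * b ^+ j) : {poly {poly F}}).
  have Hle : forall j, (j < n)%N -> (size (rr j) <= 1 + j * k)%N.
    move=> j _; rewrite /rr -(size_Phi_pow j Ek); exact: size_Phi_polAM.
  have Hn' : size (rr n) = (1 + n * k)%N.
    by rewrite /rr size_Phi_polAM_eq ?(size_Phi_pow n Ek) // comp_poly2_eq0.
  have [S _] := size_sum_top (ltn0Sn 0) k0 Hle Hn'.
  have := congr1 (fun u => size (Phi u)) EwY.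
  rewrite /= (PhiY hA) size_polyX Phi_sum Hn S => E.
  have : (n * k = 1)%N by lia.
  by rewrite Ek => /eqP; rewrite muln_eq1 => /andP[_ /eqP ->].
set q := Phi b.
have Eb : b = polA q`_0 X + polA q`_1 X * Y.
  rewrite -{1}(sigPhi hA b) -/q /sig Sb !big_ord_recl big_ord0 addr0 /=.
  by rewrite expr0 mulr1 expr1.
have EbX : b * X - X * b = polA (q`_1 * h) X.
  rewrite Eb mulrDl mulrDr opprD addrACA -polA_comm subrr add0r polAM.
  rewrite -mulrA (YX hA) mulrDr !mulrA -(polA_comm q`_1 X) addrAC subrr add0r.
  by [].
have Eba : b * a - a * b = g`_1 *: polA (q`_1 * h) X.
  rewrite EaX mulrDr mulrDl mulr_algr mulr_algl -scalerAr -scalerAl opprD addrACA subrr addr0.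
  by rewrite -scalerBr EbX.
have Eq1 : q`_1 = (g`_1 ^+ d.-1)%:P.
  have E2 : g`_1 *: (q`_1 * h) = g`_1 *: (g`_1 ^+ d.-1 *: h).
    apply: (polA_inj hA); rewrite polAZ -Eba Rab Eha Ll scalerA -exprS prednK //.
    by rewrite polAZ.
  have := scalerI al0 E2; rewrite -mul_polyC => E3.
  exact: (mulIf h_neq0 E3).
exists al, be, q`_0; split => //; split => //.
by rewrite -/b Eb Eq1 polAC mulr_algl addrC.
Qed.



Local Notation phi := (phi X Y).
Local Notation tau := (tau h X Y).

Lemma phi_hom f : alg_hom (phi f). Proof. exact: (phi_spec hA f).1. Qed.
Lemma phiX f : phi f X = X. Proof. exact: (phi_spec hA f).2.1. Qed.
Lemma phiY f : phi f Y = Y + polA f X. Proof. exact: (phi_spec hA f).2.2. Qed.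

Lemma phi_polA f g : phi f (polA g X) = polA g X.
Proof. by rewrite (hom_polA (phi_hom f)) phiX. Qed.

Lemma phi_add f g : phi (f + g) = phi f \o phi g.
Proof.
apply: (uniqA hA (phi_hom _) (hom_comp (phi_hom f) (phi_hom g))) => /=.
  by rewrite !phiX.
by rewrite !phiY (homD (phi_hom f)) phiY phi_polA polAD addrA.
Qed.

Lemma phi0 : phi 0 = id.
Proof.
apply: (uniqA hA (phi_hom _) (@hom_id _ A)); first by rewrite phiX.
by rewrite phiY polA0 addr0.
Qed.

Lemma phi_aut f : alg_aut (phi f).
Proof.
split; first exact: phi_hom.
exists (phi (- f)) => u.
- by have := congr1 (fun g => g u) (phi_add (- f) f); rewrite addNr phi0 /=.
- by have := congr1 (fun g => g u) (phi_add f (- f)); rewrite addrN phi0 /=.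
Qed.

Lemma phi_inj f g : phi f = phi g -> f = g.
Proof.
move=> E; have := congr1 (fun k => k Y) E; rewrite /= !phiY => /addrI.
exact: (polA_inj hA).
Qed.

Lemma tau_hom a b : inP h a b -> alg_hom (tau a b).
Proof. by move=> P; exact: (tau_spec hdeg hA P).1. Qed.
Lemma tauX a b : inP h a b -> tau a b X = a *: X + b%:A.
Proof. by move=> P; exact: (tau_spec hdeg hA P).2.1. Qed.
Lemma tauY a b : inP h a b -> tau a b Y = a ^+ d.-1 *: Y.
Proof. by move=> P; exact: (tau_spec hdeg hA P).2.2. Qed.

Lemma inP10 : inP h 1 0.
Proof.
split; first exact: oner_neq0.
have -> : (1 : F) *: ('X : {poly F}) + 0%:P = 'X by rewrite scale1r addr0.
by rewrite comp_polyXr expr1n scale1r.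
Qed.

Lemma tau10 : tau 1 0 = id.
Proof.
apply: (uniqA hA (tau_hom inP10) (@hom_id _ A)).
  by rewrite (tauX inP10) scale1r scale0r addr0.
by rewrite (tauY inP10) expr1n scale1r.
Qed.

Lemma inP_comp a b a' b' : inP h a b -> inP h a' b' -> inP h (a * a') (a' * b + b').
Proof.
move=> [a0 E] [a0' E']; split; first by rewrite mulf_neq0.
have -> : (a * a') *: 'X + (a' * b + b')%:P = (a' *: 'X + b'%:P) \Po (a *: 'X + b%:P).
  rewrite comp_polyD comp_polyZ comp_polyX comp_polyC -!mul_polyC !polyCD !polyCM; ring.
by rewrite comp_polyA E' comp_polyZ E scalerA exprMn mulrC.
Qed.

Lemma tau_comp a b a' b' : inP h a b -> inP h a' b' ->
  tau a b \o tau a' b' = tau (a * a') (a' * b + b').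
Proof.
move=> P P'; have P'' := inP_comp P P'.
apply: (uniqA hA (hom_comp (tau_hom P) (tau_hom P')) (tau_hom P'')) => /=.
  rewrite !tauX // (homD (tau_hom P)) (homZ (tau_hom P)) (homA (tau_hom P)) tauX //.
  by rewrite scalerDr !scalerA [a' * a]mulrC scalerDl addrA.
rewrite !tauY // (homZ (tau_hom P)) tauY // scalerA exprMn mulrC.
by [].
Qed.


Lemma inP_inv a b : inP h a b -> inP h a^-1 (- (a^-1 * b)).
Proof.
move=> [a0 E]; split; first by rewrite invr_eq0.
set q := a^-1 *: 'X + (- (a^-1 * b))%:P.
have Eq : (a *: 'X + b%:P) \Po q = 'X.
  rewrite comp_polyD comp_polyZ comp_polyX comp_polyC /q scalerDr scalerA mulfV // scale1r.
  by rewrite -mul_polyC -polyCM mulrN mulrA mulfV // mul1r polyCN addrNK.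
have : h = a ^+ d *: (h \Po q).
  by rewrite -comp_polyZ -E -comp_polyA Eq comp_polyXr.
move=> Eh; apply: (scalerI (expf_neq0 d a0)).
by rewrite -Eh scalerA -exprMn mulfV // expr1n scale1r.
Qed.

Lemma tau_inv a b : inP h a b ->
  tau a b \o tau a^-1 (- (a^-1 * b)) = id /\ tau a^-1 (- (a^-1 * b)) \o tau a b = id.
Proof.
move=> P; have P' := inP_inv P; have a0 := P.1.
rewrite !tau_comp //; split.
- by rewrite mulfV // subrr tau10.
- by rewrite mulVf // mulrN mulrA mulfV // mul1r addNr tau10.
Qed.

Lemma tau_aut a b : inP h a b -> alg_aut (tau a b).
Proof.
move=> P; split; first exact: tau_hom.
have [E1 E2] := tau_inv P.
exists (tau a^-1 (- (a^-1 * b))) => u.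
- by have := congr1 (fun g => g u) E2.
- by have := congr1 (fun g => g u) E1.
Qed.

Lemma tau_iter a b n : inP h a b -> inP h (a ^+ n) (b * \sum_(i < n) a ^+ i) /\
  iter n (tau a b) = tau (a ^+ n) (b * \sum_(i < n) a ^+ i).
Proof.
move=> P; elim: n => [|n [IP IE]].
  by rewrite big_ord0 mulr0 expr0 tau10; split => //; exact: inP10.
have E : a ^+ n.+1 = a * a ^+ n by rewrite exprS.
have Es : b * \sum_(i < n.+1) a ^+ i = a ^+ n * b + b * \sum_(i < n) a ^+ i.
  by rewrite big_ord_recr /= mulrDr addrC mulrC.
rewrite E Es; split; first exact: inP_comp.
rewrite -tau_comp //; apply: functional_extensionality => u /=.
by rewrite IE.
Qed.

Lemma aut_decomp (w : A -> A) : alg_aut w -> exists (al be : F) (f : {poly F}),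
  inP h al be /\ w = phi f \o tau al be.
Proof.
move=> aw; have [al [be [c [P [EX EY]]]]] := aut_form aw.
have a0 : al ^+ d.-1 != 0 by rewrite expf_neq0 // P.1.
exists al, be, ((al ^+ d.-1)^-1 *: c); split => //.
apply: (uniqA hA aw.1 (hom_comp (phi_hom _) (tau_hom P))) => /=.
  by rewrite (tauX P) (homD (phi_hom _)) (homZ (phi_hom _)) (homA (phi_hom _)) phiX.
rewrite (tauY P) (homZ (phi_hom _)) phiY scalerDr polAZ scalerA mulfV // scale1r.
by [].
Qed.

Lemma phi_normal (w : A -> A) f : alg_aut w ->
  exists g, w \o phi f = phi g \o w.
Proof.
move=> aw; have [al [be [c [P [EX EY]]]]] := aut_form aw.
have a0 : al ^+ d.-1 != 0 by rewrite expf_neq0 // P.1.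
exists ((al ^+ d.-1)^-1 *: (f \Po (al *: 'X + be%:P))).
apply: (uniqA hA (hom_comp aw.1 (phi_hom _)) (hom_comp (phi_hom _) aw.1)) => /=.
  by rewrite phiX EX (homD (phi_hom _)) (homZ (phi_hom _)) (homA (phi_hom _)) phiX.
rewrite phiY (homD aw.1) (hom_polA aw.1) EY (homD (phi_hom _)) (homZ (phi_hom _)).
rewrite phiY phi_polA scalerDr polAZ scalerA mulfV // scale1r polA_comp EX.
rewrite polAD polAZ polAX polAC.
by rewrite -addrA [polA c X + _]addrC addrA.
Qed.


Lemma tau_phi_eq a b f : inP h a b -> tau a b = phi f -> a = 1 /\ b = 0 /\ f = 0.
Proof.
move=> P E.
have EX := congr1 (fun g => g X) E; rewrite /= (tauX P) phiX in EX.
have Ep : a *: 'X + b%:P = 'X :> {poly F}.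
  by apply: (polA_inj hA); rewrite polAD polAZ polAX polAC EX.
have a1 : a = 1.
  by have := congr1 (fun p : {poly F} => p`_1) Ep; rewrite /= coefD coefZ !coefX coefC /= mulr1 addr0.
have b0 : b = 0.
  by have := congr1 (fun p : {poly F} => p`_0) Ep; rewrite /= coefD coefZ !coefX coefC /= mulr0 add0r.
split => //; split => //.
have EY := congr1 (fun g => g Y) E; rewrite /= (tauY P) phiY a1 expr1n scale1r in EY.
apply: (polA_inj hA); rewrite polA0.
by apply: (addrI Y); rewrite -EY addr0.
Qed.

End Final.

Theorem theorem8p3 (F : fieldType) (h : {poly F}) (hdeg : (1 <= degp h)%N)
  (A : algType F) (X Y : A) (hA : is_Ah h X Y) :
  (* (i) *)
  (forall w : A -> A, alg_aut w ->
     exists (alpha beta : F) (f : {poly F}),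
       inP h alpha beta /\ w = phi X Y f \o tau h X Y alpha beta) /\
  (* (ii) *)
  (forall (alpha beta : F) (f : {poly F}), inP h alpha beta ->
     (tau h X Y alpha beta = phi X Y f <-> alpha = 1 /\ beta = 0 /\ f = 0)) /\
  (* (iii) *)
  (forall (alpha beta : F) (l : nat), inP h alpha beta -> alpha != 1 ->
     (2 <= l)%N -> alpha ^+ l = 1 -> iter l (tau h X Y alpha beta) = id) /\
  (* (iv) {phi_f} is an abelian group isomorphic to (F[x], +) via f |-> phi_f,
     and a normal subgroup of Aut_F(A_h) *)
  ((forall f : {poly F}, alg_aut (phi X Y f)) /\
   (forall f g : {poly F}, phi X Y (f + g) = phi X Y f \o phi X Y g) /\
   phi X Y 0 = id /\
   (forall f g : {poly F}, phi X Y f = phi X Y g -> f = g) /\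
   (forall w : A -> A, alg_aut w -> forall f : {poly F},
      exists g : {poly F}, w \o phi X Y f = phi X Y g \o w)) /\
  (* (v) tau_P is a subgroup and Aut = {phi_f} x| tau_P *)
  ((forall alpha beta : F, inP h alpha beta -> alg_aut (tau h X Y alpha beta)) /\
   inP h 1 0 /\ tau h X Y 1 0 = id /\
   (forall a b a' b' : F, inP h a b -> inP h a' b' ->
      exists a'' b'' : F, inP h a'' b'' /\
        tau h X Y a b \o tau h X Y a' b' = tau h X Y a'' b'') /\
   (forall a b : F, inP h a b ->
      exists a' b' : F, inP h a' b' /\ tau h X Y a' b' \o tau h X Y a b = id) /\
   (forall (a b : F) (f : {poly F}), inP h a b ->
      tau h X Y a b = phi X Y f -> tau h X Y a b = id) /\
   (forall w : A -> A, alg_aut w ->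
      exists (f : {poly F}) (a b : F), inP h a b /\
        w = phi X Y f \o tau h X Y a b)).
Proof.
split; first exact: (aut_decomp hdeg hA).
split.
  move=> al be f P; split; first exact: (tau_phi_eq hdeg hA P).
  by move=> [-> [-> ->]]; rewrite (tau10 hdeg hA) (phi0 hA).
split.
  move=> al be l P a1 l2 al1.
  have [_ ->] := tau_iter hdeg hA l P.
  have S0 : \sum_(i < l) al ^+ i = 0.
    have := subrX1 al l; rewrite al1 subrr => /esym/eqP; rewrite mulf_eq0 subr_eq0.
    by rewrite (negbTE a1) => /eqP.
  by rewrite S0 mulr0 al1 (tau10 hdeg hA).
split.
  split; first exact: (phi_aut hA).
  split; first exact: (phi_add hA).
  split; first exact: (phi0 hA).
  split; first exact: (phi_inj hA).
  by move=> w aw f; exact: (phi_normal hdeg hA f aw).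
split; first by move=> al be P; exact: (tau_aut hdeg hA P).
split; first exact: inP10.
split; first exact: (tau10 hdeg hA).
split.
  move=> a b a' b' P P'; exists (a * a'), (a' * b + b'); split.
    exact: inP_comp.
  exact: (tau_comp hdeg hA P P').
split.
  move=> a b P; exists a^-1, (- (a^-1 * b)); split; first exact: inP_inv.
  exact: (tau_inv hdeg hA P).2.
split.
  move=> a b f P E; have [a1 [b0 _]] := tau_phi_eq hdeg hA P E.
  by rewrite a1 b0 (tau10 hdeg hA).
move=> w aw; have [al [be [f [P E]]]] := aut_decomp hdeg hA aw.
by exists f, al, be.
Qed.
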